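(* Let $A\in\mathbb{R}^{m\times n}$, $b\in\mathbb{R}^m$, and $c,c'\in\mathbb{R}^n$. Let $s'$ be an optimal dual solution to $\operatorname{LP}(c')$, i.e. $s'=c'-A^\top y'\ge\mathbb{0}$ for some $y'\in\mathbb{R}^m$ with $(y',s')$ optimal for the dual $\max\{\langle b,y\rangle: A^\top y+s=c',\ s\ge\mathbb{0}\}$. If $c\in\ker(A)$, $\|c\|_2=1$, and $\|c-c'\|_\infty<1/(\sqrt n(m+2)\kappa_A)$, then there exists an index $j\in[n]$ with \[s'_j>\frac{m+1}{\sqrt n(m+2)}.\]
   Context: $\operatorname{LP}(\tilde c)$ denotes $\min\{\langle\tilde c,x\rangle: Ax=b,\ x\ge\mathbb{0}\}$. An elementary vector of $\ker(A)$ is a nonzero $g\in\ker(A)$ with inclusion-minimal support among nonzero vectors of $\ker(A)$; the circuit imbalance is $\kappa_A=\max\{|g_i|/|g_j|: g \text{ elementary},\ i,j\in\mathrm{supp}(g)\}$ (so $\kappa_A\ge 1$). *)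

(* Defs.v *)
From HB Require Import structures.
From mathcomp Require Import all_boot all_order all_algebra.
From mathcomp Require Import reals.
Set Implicit Arguments. Unset Strict Implicit. Unset Printing Implicit Defensive.
Import Order.TTheory GRing.Theory Num.Theory.
Local Open Scope ring_scope.

Definition supp (R : realType) (n : nat) (g : 'cV[R]_n) : {set 'I_n} :=
  [set i | g i 0 != 0].

Definition elementary (R : realType) (m n : nat) (A : 'M[R]_(m, n))
  (g : 'cV[R]_n) : Prop :=
  [/\ g != 0, A *m g = 0 &
      forall h : 'cV[R]_n, h != 0 -> A *m h = 0 ->
        supp h \subset supp g -> supp h = supp g].

Definition circuit_imbalance (R : realType) (m n : nat) (A : 'M[R]_(m, n))
  (k : R) : Prop :=
  (forall g i j, elementary A g -> i \in supp g -> j \in supp g ->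
      `|g i 0| / `|g j 0| <= k) /\
  (exists g i j, [/\ elementary A g, i \in supp g, j \in supp g &
      `|g i 0| / `|g j 0| = k]).

Definition norm2 (R : realType) (n : nat) (v : 'cV[R]_n) : R :=
  Num.sqrt (\sum_i v i 0 ^+ 2).

Definition normInf (R : realType) (n : nat) (v : 'cV[R]_n) : R :=
  \big[Num.max/0]_i `|v i 0|.

Definition dotv (R : realType) (n : nat) (u v : 'cV[R]_n) : R :=
  \sum_i u i 0 * v i 0.

Definition dual_optimal_slack (R : realType) (m n : nat) (A : 'M[R]_(m, n))
  (b : 'cV[R]_m) (c' s' : 'cV[R]_n) : Prop :=
  exists y' : 'cV[R]_m,
    [/\ s' = c' - A^T *m y',
        (forall i, 0 <= s' i 0) &
        forall (y : 'cV[R]_m) (s : 'cV[R]_n),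
          A^T *m y + s = c' -> (forall i, 0 <= s i 0) ->
          dotv b y <= dotv b y'].

(* Main.v *)
Require Import Defs.
From HB Require Import structures.
From mathcomp Require Import all_boot all_order all_algebra.
From mathcomp Require Import reals.
From mathcomp Require Import ring lra.
Import Order.TTheory GRing.Theory Num.Theory.
Local Open Scope ring_scope.

Lemma le_bigmax0 (R : realType) n (F : 'I_n -> R) i :
  F i <= \big[Num.max/0]_j F j.
Proof.
have : i \in index_enum 'I_n by rewrite mem_index_enum.
elim: (index_enum _) => [|x r IH] //.
rewrite big_cons in_cons => /orP[/eqP->|/IH H]; rewrite le_max ?lexx //.
by rewrite H orbT.
Qed.

Theorem lemma2p10 (R : realType) (m n : nat) (A : 'M[R]_(m, n))
  (b : 'cV[R]_m) (c c' s' : 'cV[R]_n) (kappa : R) :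
  circuit_imbalance A kappa ->
  dual_optimal_slack A b c' s' ->
  A *m c = 0 ->
  norm2 c = 1 ->
  normInf (c - c') < 1 / (Num.sqrt (n%:R) * (m + 2)%:R * kappa) ->
  exists j : 'I_n, s' j 0 > (m + 1)%:R / (Num.sqrt (n%:R) * (m + 2)%:R).
Proof.
move=> [kub [g [i [j [gel gi gj _]]]]] [y' [hs' hs0 _]] hAc hn2 hd.
have k1 : 1 <= kappa.
  have := kub g i i gel gi gi.
  by rewrite divff // normr_eq0; move: gi; rewrite inE.
set s := Num.sqrt (n%:R).
have hS : \sum_i0 c i0 0 ^+ 2 = 1.
  have h0 : 0 <= \sum_i0 c i0 0 ^+ 2 by apply: sumr_ge0 => k _; exact: sqr_ge0.
  by rewrite -(sqr_sqrtr h0); move: hn2; rewrite /norm2 => ->; rewrite expr1n.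
have s2 : s ^+ 2 = n%:R by rewrite sqr_sqrtr // ler0n.
have s0 : 0 <= s by exact: sqrtr_ge0.
set L := \sum_i0 `|c i0 0|.
have hL : 2 * s * L <= s ^+ 2 * (\sum_i0 c i0 0 ^+ 2) + n%:R.
  have -> : n%:R = \sum_(k < n) (1:R) by rewrite sumr_const card_ord.
  rewrite mulr_sumr mulr_sumr -big_split /=.
  apply: ler_sum => k _.
  have := sqr_ge0 (s * `|c k 0| - 1).
  rewrite -[c k 0 ^+ 2]real_normK ?num_real //; nra.
rewrite hS in hL.
have sp : 0 < s.
  rewrite sqrtr_gt0 ltr0n lt0n; apply/eqP => n0.
  move: hS; rewrite big1 => [/eqP|k _]; first by rewrite eq_sym oner_eq0.
  by have := ltn_ord k; rewrite {2}n0.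
have hLs : L <= s.
  rewrite s2 in hL; nra.
set d := normInf (c - c').
have hdk : forall k, `|c k 0 - c' k 0| <= d.
  move=> k; have := @le_bigmax0 R n (fun k => `|(c - c') k 0|) k.
  by rewrite !mxE.
set K := (m + 2)%:R : R.
have Kp : 0 < K by rewrite ltr0n addn2.
have hsd : s * d * K * kappa < 1.
  have kp : 0 < kappa by rewrite (lt_le_trans ltr01 k1).
  move: hd; rewrite ltr_pdivlMr ?mulr_gt0 //.
  by rewrite !mulrA (mulrC d s).
set T := (m + 1)%:R / (s * K).
case: (boolP [exists k, T < s' k 0]) => [/existsP [k hk]|hne]; first by exists k.
have hT' : forall k, s' k 0 <= T.
  by move=> k; rewrite leNgt; apply/negP => hk; move/existsP: hne; apply; exists k.
exfalso.
have hz : \sum_k c k 0 * (c' k 0 - s' k 0) = 0.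
  have : (c^T *m (A^T *m y')) 0 0 = 0.
    by rewrite mulmxA -trmx_mul hAc trmx0 mul0mx mxE.
  move=> H; rewrite -[RHS]H mxE; apply: eq_bigr => k _.
  by rewrite hs' !mxE opprB addrC subrK.
have hsplit : \sum_k c k 0 ^+ 2 = \sum_k c k 0 * s' k 0
   + \sum_k c k 0 * (c k 0 - c' k 0) + \sum_k c k 0 * (c' k 0 - s' k 0).
  rewrite -!big_split /=; apply: eq_bigr => k _; ring.
have h1 : \sum_k c k 0 * s' k 0 <= L * T.
  rewrite /L mulr_suml; apply: ler_sum => k _.
  have := hs0 k; have := hT' k; have := normr_ge0 (c k 0).
  have := ler_norm (c k 0); have := ler_norm (- c k 0); rewrite normrN; nra.
have h2 : \sum_k c k 0 * (c k 0 - c' k 0) <= L * d.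
  rewrite /L mulr_suml; apply: ler_sum => k _.
  rewrite (le_trans (ler_norm _)) // normrM ler_wpM2l //.
have hTs : s * T * K = (m + 1)%:R.
  rewrite /T; field.
  rewrite (gt_eqF sp) andbT; apply/eqP; move: Kp; rewrite /K natrD; lra.
have d0 : 0 <= d by rewrite (le_trans _ (hdk j)).
have T0 : 0 <= T by rewrite (le_trans _ (hT' j)).
have hm : (m + 1)%:R = K - 1 by rewrite /K !natrD; ring.
rewrite hm in hTs.
have : 1 <= s * (T + d).
  rewrite -hS hsplit hz addr0 mulrDr.
  have : L * T <= s * T by rewrite ler_wpM2r.
  have : L * d <= s * d by rewrite ler_wpM2r.
  lra.
move=> H.
have : s * d * K <= s * d * K * kappa.
  rewrite -{1}[s * d * K]mulr1 ler_wpM2l // ?mulr_ge0 //.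
nra.
Qed.
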